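(* Let $T$ be a Lie triple system over a field of characteristic zero and $U(T)$ its universal enveloping algebra. For $a,c\in T$ let $D_{a,c}\colon U(T)\to U(T)$, $D_{a,c}(x)=a(cx)-c(ax)$. Then for all $n\ge 1$ and $a,b,c\in T$, $$(c^n,a,b)=\frac{n}{2}\,c^{n-1}[a,c,b]-\frac12\sum_{i=0}^{n-2}\bigl(c^i,\,D_{a,c}(c^{n-1-i}),\,b\bigr).$$ Moreover, for all $n\ge 1$ and $a,c\in T$, $$c^n a=\tfrac12\,(ac^n+c^na)+\sum_{i=0}^{n-2}c^i\,(a,c,c^{n-1-i}).$$
   Context: A Lie triple system (L.t.s.) is a vector space $T$ with a trilinear product $[x,y,z]$ satisfying $[x,x,y]=0$, $[x,y,z]+[y,z,x]+[z,x,y]=0$, and $[a,b,[x,y,z]]=[[a,b,x],y,z]+[x,[a,b,y],z]+[x,y,[a,b,z]]$. For a unital nonassociative algebra $A$ with associator $(x,y,z)=(xy)z-x(yz)$, $\mathrm{LN_{alt}}(A)=\{a\in A : (a,x,y)=-(x,a,y)\ \forall x,y\in A\}$ is an L.t.s. with $[a,b,c]=a(bc)-b(ac)-c(ab)+c(ba)$. The universal enveloping algebra $U(T)$ is the unital algebra with an L.t.s. monomorphism $T\to\mathrm{LN_{alt}}(U(T))$ (elements of $T$ identified with their images) such that $ab=ba$ for $a,b\in T$, universal for L.t.s. homomorphisms into $\mathrm{LN_{alt}}(A)$ with this commutation property. For $c\in T$ the subalgebra generated by $c$ is associative, so $c^n$ is well defined ($c^0=1$). *)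

(* Defs.v *)
From HB Require Import structures.
From mathcomp Require Import all_boot all_order all_algebra.
Set Implicit Arguments. Unset Strict Implicit. Unset Printing Implicit Defensive.
Import GRing.Theory.
Local Open Scope ring_scope.

Definition is_lin (K : fieldType) (V W : lmodType K) (f : V -> W) : Prop :=
  forall (k : K) (x y : V), f (k *: x + y) = k *: f x + f y.

Definition trilinear (K : fieldType) (T : lmodType K) (tp : T -> T -> T -> T) :=
  [/\ forall y z, is_lin (fun x => tp x y z),
      forall x z, is_lin (fun y => tp x y z) &
      forall x y, is_lin (fun z => tp x y z)].

Definition is_lts (K : fieldType) (T : lmodType K) (tp : T -> T -> T -> T) :=
  [/\ trilinear tp,
      forall x y, tp x x y = 0,
      forall x y z, tp x y z + tp y z x + tp z x y = 0 &
      forall a b x y z, tp a b (tp x y z)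
        = tp (tp a b x) y z + tp x (tp a b y) z + tp x y (tp a b z)].

Definition is_ualg (K : fieldType) (A : lmodType K) (mul : A -> A -> A) (one : A) :=
  [/\ forall y, is_lin (fun x => mul x y),
      forall x, is_lin (fun y => mul x y),
      forall x, mul one x = x &
      forall x, mul x one = x].

Definition assoc (K : fieldType) (A : lmodType K) (mul : A -> A -> A) (x y z : A) :=
  mul (mul x y) z - mul x (mul y z).

Definition in_LNalt (K : fieldType) (A : lmodType K) (mul : A -> A -> A) (a : A) :=
  forall x y, assoc mul a x y = - assoc mul x a y.

Definition lnalt_tp (K : fieldType) (A : lmodType K) (mul : A -> A -> A) (a b c : A) :=
  mul a (mul b c) - mul b (mul a c) - mul c (mul a b) + mul c (mul b a).

Definition comm_lts_hom (K : fieldType) (T : lmodType K) (tp : T -> T -> T -> T)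
    (B : lmodType K) (mulB : B -> B -> B) (f : T -> B) :=
  [/\ is_lin f,
      forall a, in_LNalt mulB (f a),
      forall a b c, f (tp a b c) = lnalt_tp mulB (f a) (f b) (f c) &
      forall a b, mulB (f a) (f b) = mulB (f b) (f a)].

Definition ualg_hom (K : fieldType) (A B : lmodType K) (mulA : A -> A -> A) (oneA : A)
    (mulB : B -> B -> B) (oneB : B) (g : A -> B) :=
  [/\ is_lin g, g oneA = oneB & forall x y, g (mulA x y) = mulB (g x) (g y)].

Definition is_UEA (K : fieldType) (T : lmodType K) (tp : T -> T -> T -> T)
    (A : lmodType K) (mul : A -> A -> A) (one : A) (iota : T -> A) :=
  [/\ is_ualg mul one,
      comm_lts_hom tp mul iota,
      injective iota &
      forall (B : lmodType K) (mulB : B -> B -> B) (oneB : B),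
        is_ualg mulB oneB ->
        forall f : T -> B, comm_lts_hom tp mulB f ->
        exists g : A -> B,
          [/\ ualg_hom mul one mulB oneB g,
              forall a, g (iota a) = f a &
              forall g' : A -> B, ualg_hom mul one mulB oneB g' ->
                 (forall a, g' (iota a) = f a) -> forall x, g' x = g x]].

(* Powers x^n := x (x (... (x 1))) ; for x = c in T this is well defined
   since the subalgebra generated by c is associative. *)
Definition npow (K : fieldType) (A : lmodType K) (mul : A -> A -> A) (one : A)
    (x : A) (n : nat) : A := iter n (mul x) one.

Definition Dop (K : fieldType) (A : lmodType K) (mul : A -> A -> A) (a c x : A) :=
  mul a (mul c x) - mul c (mul a x).

(* Main.v *)
Require Import Defs.
From HB Require Import structures.
From mathcomp Require Import all_boot all_order all_algebra.
Import GRing.Theory.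
Local Open Scope ring_scope.
Set Implicit Arguments. Unset Strict Implicit.

Lemma zid2 (V : zmodType) (X W Y Sg : V) :
  (X - W) + (X - W) = (Y + X - W - W - Sg) - (-(X - Y) - Sg).
Proof.
rewrite (opprB (- (X - Y))) opprK [in RHS]addrA subrK [RHS]addrC -!addrA addKr.
by rewrite [- W + (X - W)]addrCA.
Qed.

Lemma comb3 (V : zmodType) (a1 a2 a3 b1 b2 b3 : V) :
  (a1 + a2 + a3) + (b1 + b2 + b3) = (a1 + b1) + (a2 + b2) + (a3 + b3).
Proof. by rewrite addrACA [(a1 + a2) + _]addrACA. Qed.
Lemma neg3 (V : zmodType) (b1 b2 b3 : V) : -(b1 + b2 + b3) = -b1 + -b2 + -b3.
Proof. by rewrite !opprD. Qed.
Lemma zid3 (V : zmodType) (a1 a2 a3 b1 b2 b3 : V) :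
  (a1 + (a2 + a3)) - ((b1 + b2) + b3) = (a1 - b1) + (a2 - b2) + (a3 - b3).
Proof. by rewrite addrA neg3 comb3. Qed.
Lemma zid4 (V : zmodType) (a1 a2 a3 b1 b2 b3 c1 c2 c3 d1 d2 d3 : V) :
  (a1 + a2 + a3) - (b2 + b1 + b3) - (c3 + c1 + c2) + (d3 + d2 + d1)
  = (a1 - b1 - c1 + d1) + (a2 - b2 - c2 + d2) + (a3 - b3 - c3 + d3).
Proof.
rewrite [b2 + b1]addrC [c3 + c1]addrC [c1 + c3 + c2]addrAC [d3 + d2]addrC.
rewrite [d2 + d3 + d1]addrAC [d2 + d1]addrC.
rewrite (@neg3 _ b1) (@neg3 _ c1) (@comb3 _ a1 a2 a3 (-b1)) (@comb3 _ (a1 - b1) (a2 - b2) (a3 - b3) (-c1)).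
exact: comb3.
Qed.

Lemma zid5 (V : zmodType) (a1 a2 a3 b1 b2 b3 c1 c2 c3 d1 d2 d3 : V) :
  (a3 + a2 + a1) - (b3 + b1 + b2) - (c2 + c1 + c3) + (d1 + d2 + d3)
  = (a1 - b1 - c1 + d1) + (a2 - b2 - c2 + d2) + (a3 - b3 - c3 + d3).
Proof.
rewrite [a3 + a2]addrC [a2 + a3 + a1]addrAC [a2 + a1]addrC.
rewrite [b3 + b1]addrC [b1 + b3 + b2]addrAC [c2 + c1]addrC.
rewrite (@neg3 _ b1) (@neg3 _ c1) (@comb3 _ a1 a2 a3 (-b1)) (@comb3 _ (a1 - b1) (a2 - b2) (a3 - b3) (-c1)).
exact: comb3.
Qed.

Section Lin.
Variables (K : fieldType) (V W : lmodType K) (f : V -> W).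
Hypothesis Hf : is_lin f.
Lemma linD x y : f (x + y) = f x + f y.
Proof. by have := Hf 1 x y; rewrite !scale1r. Qed.
Lemma lin0 : f 0 = 0.
Proof. by apply: (@addrI _ (f 0)); rewrite -linD !addr0. Qed.
Lemma linZ k x : f (k *: x) = k *: f x.
Proof. by have := Hf k x 0; rewrite !addr0 lin0 addr0. Qed.
Lemma linN x : f (- x) = - f x.
Proof. by rewrite -scaleN1r linZ scaleN1r. Qed.
Lemma linB x y : f (x - y) = f x - f y.
Proof. by rewrite linD linN. Qed.
Lemma lin_sum n (F : 'I_n -> V) : f (\sum_(i < n) F i) = \sum_(i < n) f (F i).
Proof. exact: (big_morph f linD lin0). Qed.
End Lin.

Section Alg.
Variables (K : fieldType) (A : lmodType K) (mul : A -> A -> A) (one : A).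
Hypothesis Hm : is_ualg mul one.
Hypothesis two_nz : (2%:R : K) != 0.

Lemma Hl y : is_lin (fun x => mul x y). Proof. by case: Hm. Qed.
Lemma Hr x : is_lin (fun y => mul x y). Proof. by case: Hm. Qed.
Lemma mul1x x : mul one x = x. Proof. by case: Hm. Qed.
Lemma mulx1 x : mul x one = x. Proof. by case: Hm. Qed.
Lemma mulDl x y z : mul (x + y) z = mul x z + mul y z. Proof. by have := linD (Hl z) x y. Qed.
Lemma mulDr x y z : mul z (x + y) = mul z x + mul z y. Proof. by have := linD (Hr z) x y. Qed.
Lemma mulBl x y z : mul (x - y) z = mul x z - mul y z. Proof. by have := linB (Hl z) x y. Qed.
Lemma mulBr x y z : mul z (x - y) = mul z x - mul z y. Proof. by have := linB (Hr z) x y. Qed.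
Lemma mulNl x z : mul (- x) z = - mul x z. Proof. by have := linN (Hl z) x. Qed.
Lemma mulNr x z : mul z (- x) = - mul z x. Proof. by have := linN (Hr z) x. Qed.
Lemma mulZl k x z : mul (k *: x) z = k *: mul x z. Proof. by have := linZ (Hl z) k x. Qed.
Lemma mulZr k x z : mul z (k *: x) = k *: mul z x. Proof. by have := linZ (Hr z) k x. Qed.
Lemma mul0l z : mul 0 z = 0. Proof. by have := lin0 (Hl z). Qed.
Lemma mul0r z : mul z 0 = 0. Proof. by have := lin0 (Hr z). Qed.
Lemma mul_suml n (F : 'I_n -> A) z : mul (\sum_(i < n) F i) z = \sum_(i < n) mul (F i) z.
Proof. by have := lin_sum (Hl z) F. Qed.
Lemma mul_sumr n (F : 'I_n -> A) z : mul z (\sum_(i < n) F i) = \sum_(i < n) mul z (F i).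
Proof. by have := lin_sum (Hr z) F. Qed.

Lemma half (x y : A) : x + x = y + y -> x = y.
Proof. by move=> h; apply: (scalerI two_nz); rewrite !scaler_nat !mulr2n. Qed.

Lemma LN_sym t x y : in_LNalt mul t ->
  mul (mul t x + mul x t) y = mul t (mul x y) + mul x (mul t y).
Proof.
move=> /(_ x y); rewrite /assoc => /eqP; rewrite -subr_eq0 opprK => /eqP h.
apply/eqP; rewrite -subr_eq0 -h mulDl opprD addrACA //.
Qed.

Lemma LN_sq t y : in_LNalt mul t -> mul (mul t t) y = mul t (mul t y).
Proof. by move=> Ht; apply: half; rewrite -mulDl LN_sym. Qed.


Section Pow.
Variable c : A.
Hypothesis Hc : in_LNalt mul c.
Local Notation p := (npow mul one c).

Lemma pS n : p n.+1 = mul c (p n). Proof. by []. Qed.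

Lemma pow_props k : mul (p k) c = p k.+1 /\ forall y, mul (p k) y = iter k (mul c) y.
Proof.
elim: k => [|k [IH1 IH2]].
  split; first by rewrite /npow /= mul1x mulx1.
  by move=> y; rewrite /npow /= mul1x.
split.
  apply: half; rewrite -mulDl.
  have := LN_sym (p k) c Hc; rewrite IH1 -pS => ->.
  have e : mul c c = iter 2 (mul c) one by rewrite /= mulx1.
  by rewrite IH2 e -iterD addn2.
move=> y; apply: half; rewrite -mulDl.
have := LN_sym (p k) y Hc; rewrite IH1 -pS => ->.
by rewrite !IH2 -iterS -iterSr.
Qed.

Lemma pR k : mul (p k) c = p k.+1. Proof. by case: (pow_props k). Qed.
Lemma pL k y : mul (p k.+1) y = mul c (mul (p k) y).
Proof. by case: (pow_props k) => _ h1; case: (pow_props k.+1) => _ h2; rewrite h1 h2. Qed.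


Variable a : A.
Hypothesis Ha : in_LNalt mul a.
Hypothesis Hac : mul a c = mul c a.

Lemma a_cp y : mul a (mul c y) = mul c (mul a y) - (assoc mul a c y + assoc mul a c y).
Proof.
have h := Hc a y; rewrite /assoc Hac in h *.
set P := mul (mul c a) y in h *; set Q := mul c (mul a y) in h *;
set R := mul a (mul c y) in h *.
have hQ : Q = P - (P - Q) by rewrite opprB addrC subrK.
rewrite h opprK in hQ.
by rewrite hQ opprD addrA addrK opprB addrC subrK.
Qed.

Definition S m := \sum_(i < m) mul (p i) (assoc mul a c (p (m - i))).

Lemma S_rec m : S m.+1 = assoc mul a c (p m.+1) + mul c (S m).
Proof.
rewrite /S big_ord_recl /= mul1x ?subn0 mul_sumr; congr (_ + _).
by apply: eq_bigr => i _; rewrite /bump /= add1n subSS pL.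
Qed.

Lemma dS m : mul (p m.+1) a - mul a (p m.+1) = S m + S m.
Proof.
elim: m => [|m IH].
  by rewrite /S big_ord0 addr0 pL /= mul1x mulx1 Hac subrr.
rewrite pL [p m.+2]pS a_cp !S_rec opprB addrCA addrC -mulBr IH mulDr.
by rewrite [RHS]addrACA addrC.
Qed.

Lemma part2 m : mul (p m.+1) a
  = 2^-1 *: (mul a (p m.+1) + mul (p m.+1) a) + S m.
Proof.
apply: (scalerI two_nz); rewrite scalerDr scalerA mulfV // scale1r !scaler_nat !mulr2n.
by rewrite -dS [X in _ = X]addrC addrA subrK.
Qed.


Lemma vy y : mul (mul c (mul c a)) y = mul c (mul a (mul c y)).
Proof.
have h4 z : mul (mul c a) z + mul (mul c a) z = mul c (mul a z) + mul a (mul c z).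
  by rewrite -mulDl -{2}Hac LN_sym.
have hW : mul (mul c a) c + mul (mul c a) c = mul c (mul c a) + mul a (mul c c).
  by rewrite h4 Hac.
have h3 := LN_sym (mul c a) y Hc.
have h1 := LN_sym (mul c c) y Ha.
rewrite !(LN_sq _ Hc) in h1.
apply: half.
apply: (@addIr _ (mul (mul (mul c a) c) y + mul (mul (mul c a) c) y)).
rewrite -[X in _ = _ + X]mulDl hW [mul c (mul c a) + _]addrC h1.
rewrite addrACA -[mul (mul c (mul c a)) y + _]mulDl h3 addrACA -[mul c (mul (mul c a) y) + _]mulDr h4 h4 mulDr.
set X1 := mul a (mul c (mul c y)); set X2 := mul c (mul c (mul a y)).
set X3 := mul c (mul a (mul c y)).
by rewrite addrC [X3 + X1]addrC [RHS]addrC [RHS]addrACA.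
Qed.

Lemma D_c y : Dop mul a c (mul c y) = mul (Dop mul a c c) y + mul c (Dop mul a c y).
Proof.
have h1 := LN_sym (mul c c) y Ha.
rewrite !(LN_sq _ Hc) mulDl vy in h1.
rewrite /Dop mulBl mulBr Hac vy.
set X1 := mul a (mul c (mul c y)) in h1 *; set X2 := mul c (mul c (mul a y)) in h1 *.
set X3 := mul c (mul a (mul c y)) in h1 *.
have hU : mul (mul a (mul c c)) y = X1 + X2 - X3 by rewrite -h1 addrK.
by rewrite hU addrA subrK addrAC addrK.
Qed.


Local Notation D := (Dop mul a c).

Lemma D_assoc x : D x = - (assoc mul a c x + assoc mul a c x).
Proof. by rewrite /Dop a_cp addrAC subrr add0r. Qed.

Lemma D1 : D one = 0.
Proof. by rewrite /Dop !mulx1 Hac subrr. Qed.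

Variable b : A.
Hypothesis Hder : forall k, D (mul (p k) b) = mul (D (p k)) b + mul (p k) (D b).

Lemma star m : mul a (mul (p m.+1) b) - mul (p m.+1) (mul a b)
  = m.+1%:R *: mul (p m) (D b) + \sum_(i < m) mul (p i) (mul (D (p (m - i))) b).
Proof.
elim: m => [|m IH].
  by rewrite big_ord0 addr0 scale1r !pL !mul1x.
rewrite !(pL m.+1).
have e x : mul a (mul c x) = D x + mul c (mul a x) by rewrite /Dop subrK.
rewrite e -addrA -mulBr IH big_ord_recl mul1x subn0 Hder.
rewrite [mul c _]mulDr mulZr -pL mul_sumr.
have -> : \sum_(i < m) mul (p (lift ord0 i)) (mul (D (p (m.+1 - lift ord0 i))) b)
        = \sum_(i < m) mul c (mul (p i) (mul (D (p (m - i))) b)).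
  by apply: eq_bigr => i _; rewrite lift0 subSS pL.
rewrite [m.+2%:R]mulrS scalerDl scale1r.
set Y := mul (p m.+1) (D b); set Z := mul (D (p m.+1)) b.
by rewrite [in RHS]addrACA [Y + Z]addrC addrA.
Qed.


Lemma part1 m : assoc mul (p m.+1) a b
  = (m.+1%:R / 2) *: mul (p m) (D b)
    - 2^-1 *: \sum_(i < m) assoc mul (p i) (D (p (m - i))) b.
Proof.
apply: (scalerI two_nz).
rewrite [in RHS]scalerBr !scalerA [2%:R * (_ / _)]mulrC divfK // mulfV // scale1r.
rewrite scaler_nat mulr2n.
have hS : \sum_(i < m) mul (p i) (D (p (m - i))) = - (S m + S m).
  rewrite /S -big_split -sumrN; apply: eq_bigr => i _.
  by rewrite D_assoc mulNr mulDr.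
rewrite /assoc sumrB -mul_suml hS -dS mulNl mulBl.
have hL := LN_sym (p m.+1) b Ha; rewrite mulDl in hL.
have hst := star m.
set X := mul (mul (p m.+1) a) b in hL *; set Y := mul (mul a (p m.+1)) b in hL *.
set Z := mul a (mul (p m.+1) b) in hL hst *; set W := mul (p m.+1) (mul a b) in hL hst *.
set M := m.+1%:R *: mul (p m) (D b) in hst *.
set Sg := \sum_(i < m) mul (p i) (mul (D (p (m - i))) b) in hst *.
have hM : M = Z - W - Sg by rewrite hst addrK.
have hZ : Z = Y + X - W by rewrite hL addrK.
rewrite hM hZ; exact: zid2.
Qed.

End Pow.
End Alg.

Section Der.
Variables (K : fieldType) (T : lmodType K) (tp : T -> T -> T -> T).
Variables (A : lmodType K) (mul : A -> A -> A) (one : A) (iota : T -> A).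
Hypothesis HT : is_lts tp.
Hypothesis HU : is_UEA tp mul one iota.

Lemma HUm : is_ualg mul one. Proof. by case: HU. Qed.
Lemma HUi : comm_lts_hom tp mul iota. Proof. by case: HU. Qed.

Definition mulB (X Y : A * A) : A * A := (mul X.1 Y.1, mul X.1 Y.2 + mul X.2 Y.1).
Definition oneB : A * A := (one, 0).

Lemma mulB_ualg : is_ualg mulB oneB.
Proof.
have Hm := HUm.
split.
- move=> Y k X X'; rewrite /mulB; congr (_, _) => /=.
    by rewrite (mulDl Hm) (mulZl Hm).
  rewrite !(mulDl Hm) !(mulZl Hm) scalerDr.
  by rewrite addrACA.
- move=> X k Y Y'; rewrite /mulB; congr (_, _) => /=.
    by rewrite (mulDr Hm) (mulZr Hm).
  rewrite !(mulDr Hm) !(mulZr Hm) scalerDr.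
  by rewrite addrACA.
- by case=> x1 x2; rewrite /mulB /= !(mul1x Hm) (mul0l Hm) addr0.
- by case=> x1 x2; rewrite /mulB /= !(mulx1 Hm) (mul0r Hm) add0r.
Qed.


Variables a c : T.
Definition fB (t : T) : A * A := (iota t, iota (tp a c t)).

Lemma fstN (X : A * A) : (- X).1 = - X.1. Proof. by []. Qed.
Lemma sndN (X : A * A) : (- X).2 = - X.2. Proof. by []. Qed.

Lemma assocB_1 X Y Z : (assoc mulB X Y Z).1 = assoc mul X.1 Y.1 Z.1.
Proof. by []. Qed.

Lemma assocB_2 X Y Z : (assoc mulB X Y Z).2
  = assoc mul X.1 Y.1 Z.2 + assoc mul X.1 Y.2 Z.1 + assoc mul X.2 Y.1 Z.1.
Proof.
have Hm := HUm.
rewrite /assoc /mulB /= !(mulDl Hm) !(mulDr Hm); exact: zid3.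
Qed.

Lemma lnB_2 X Y Z : (lnalt_tp mulB X Y Z).2
  = lnalt_tp mul X.2 Y.1 Z.1 + lnalt_tp mul X.1 Y.2 Z.1 + lnalt_tp mul X.1 Y.1 Z.2.
Proof.
have Hm := HUm.
rewrite /lnalt_tp /mulB /= !(mulDr Hm); exact: zid5.
Qed.

Lemma HLN u x y : assoc mul (iota u) x y = - assoc mul x (iota u) y.
Proof. by case: HUi => _ h _ _; apply: h. Qed.
Lemma Hilin : is_lin iota. Proof. by case: HUi. Qed.
Lemma Hitp u v w : iota (tp u v w) = lnalt_tp mul (iota u) (iota v) (iota w).
Proof. by case: HUi. Qed.
Lemma Hicom u v : mul (iota u) (iota v) = mul (iota v) (iota u).
Proof. by case: HUi. Qed.

Lemma fB_hom : comm_lts_hom tp mulB fB.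
Proof.
case: HT => [[Ht1 Ht2 Ht3] _ _ Hjd].
split.
- move=> k x y; rewrite /fB; congr (_, _); first exact: Hilin.
  by have /= -> := Ht3 a c k x y; apply: Hilin.
- move=> t X Y.
  rewrite [LHS]surjective_pairing [RHS]surjective_pairing; congr (_, _).
    by rewrite fstN !assocB_1 HLN.
  rewrite sndN !assocB_2 /fB /= !HLN.
  by rewrite neg3 addrAC.
- move=> x y z; rewrite [RHS]surjective_pairing /fB; congr (_, _).
    exact: Hitp.
  rewrite lnB_2 /= Hjd !(linD Hilin) !Hitp.
  by [].
- move=> x y; rewrite /fB /mulB /=; congr (_, _); first exact: Hicom.
  by rewrite Hicom [mul (iota (tp a c x)) _]Hicom addrC.
Qed.

Lemma der_exists : exists delta : A -> A,
  [/\ forall x y, delta (mul x y) = mul x (delta y) + mul (delta x) y,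
      delta one = 0 &
      forall t, delta (iota t) = iota (tp a c t)].
Proof.
case: HU => Hm Hi _ Huniv.
have [g [[gl g1 gm] gi _]] := Huniv _ mulB oneB mulB_ualg fB fB_hom.
have [g0 [_ _ g0u]] := Huniv _ mul one Hm iota Hi.
have fstg x : (g x).1 = x.
  have h1 : forall x, (g x).1 = g0 x.
    apply: g0u; last by move=> t; rewrite gi.
    split; last by move=> u v; rewrite gm.
      by move=> k u v; rewrite gl.
    by rewrite g1.
  have h2 : forall x, id x = g0 x.
    by apply: g0u => //; split.
  by rewrite h1 -h2.
exists (fun x => (g x).2); split.
- by move=> x y; rewrite gm /= !fstg.
- by rewrite g1.
- by move=> t; rewrite gi.
Qed.

End Der.


Unset Implicit Arguments.

Theorem mainTheorem2 (K : fieldType) (charK0 : [pchar K] =i pred0)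
    (T : lmodType K) (tp : T -> T -> T -> T) (HT : is_lts tp)
    (A : lmodType K) (mul : A -> A -> A) (one : A) (iota : T -> A)
    (HU : is_UEA tp mul one iota) :
  forall n : nat, (0 < n)%N ->
    (forall a b c : T,
       assoc mul (npow mul one (iota c) n) (iota a) (iota b)
       = (n%:R / 2) *: mul (npow mul one (iota c) n.-1) (iota (tp a c b))
         - 2^-1 *: \sum_(i < n.-1)
              assoc mul (npow mul one (iota c) i)
                (Dop mul (iota a) (iota c) (npow mul one (iota c) (n.-1 - i)))
                (iota b))
    /\
    (forall a c : T,
       mul (npow mul one (iota c) n) (iota a)
       = 2^-1 *: (mul (iota a) (npow mul one (iota c) n)
                  + mul (npow mul one (iota c) n) (iota a))
         + \sum_(i < n.-1)
              mul (npow mul one (iota c) i)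
                (assoc mul (iota a) (iota c) (npow mul one (iota c) (n.-1 - i)))).
Proof.
move=> [//|m] _.
have two_nz : (2%:R : K) != 0 by rewrite ((pcharf0P K).1 charK0).
have Hm := HUm HU.
have LN u : in_LNalt mul (iota u) by move=> x y; apply: (HLN HU).
have tpD u v w : iota (tp u v w) = Dop mul (iota u) (iota v) (iota w).
  by rewrite (Hitp HU) /lnalt_tp /Dop (Hicom HU u v) subrK.
split.
- move=> a b c.
  have Hac := Hicom HU a c.
  have [dl [dm d1 di]] := der_exists HT HU a c.
  have dc y : dl y = Dop mul (iota a) (iota c) y ->
      dl (mul (iota c) y) = Dop mul (iota a) (iota c) (mul (iota c) y).
    move=> hy; rewrite dm hy di tpD (D_c Hm two_nz (LN c) (LN a) Hac).
    by rewrite addrC.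
  have hp k : dl (npow mul one (iota c) k) = Dop mul (iota a) (iota c) (npow mul one (iota c) k).
    elim: k => [|k IH]; first by rewrite /= d1 (D1 Hm Hac).
    exact: dc.
  have hpb k : dl (mul (npow mul one (iota c) k) (iota b))
             = Dop mul (iota a) (iota c) (mul (npow mul one (iota c) k) (iota b)).
    elim: k => [|k IH]; first by rewrite /= (mul1x Hm) di tpD.
    by rewrite (pL Hm two_nz (LN c)); apply: dc.
  have Hder k : Dop mul (iota a) (iota c) (mul (npow mul one (iota c) k) (iota b))
    = mul (Dop mul (iota a) (iota c) (npow mul one (iota c) k)) (iota b)
      + mul (npow mul one (iota c) k) (Dop mul (iota a) (iota c) (iota b)).
    by rewrite -hpb dm hp di tpD addrC.
  rewrite tpD /=.
  exact: (part1 Hm two_nz (LN c) (LN a) Hac Hder m).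
- move=> a c.
  have Hac := Hicom HU a c.
  exact: (part2 Hm two_nz (LN c) Hac m).
Qed.
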